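(* Let $n\ge 1$ and $N>n$ be integers, let $\lambda>0$, $\beta\in(0,1)$, and let $\tilde b_0\neq 0$ be a real number. Let $\hat\Sigma\in\mathbb{R}^{(n+1)\times(n+1)}$ be a symmetric positive definite Toeplitz matrix, $[\hat\Sigma]_{ts}=\hat r_{|t-s|}$ for $t,s=1,\dots,n+1$. Let $K_{DI}=\mathrm{diag}(\beta,\beta^2,\dots,\beta^{n+1})$ and $v=[1,0,\dots,0]^T\in\mathbb{R}^{n+1}$, and define $$\hat{\mathbf b}_{ML}=[\hat b_0,\hat b_1,\dots,\hat b_n]^T=\tilde b_0^{-1}\left(\hat\Sigma+((N-n)\lambda K_{DI})^{-1}\right)^{-1}v .$$ If the polynomial $\hat b_{ML}(z)=\sum_{k=0}^n \hat b_k z^{-k}$ is not identically zero, then all its zeros lie strictly inside the unit circle, i.e. every (complex) root $\breve z$ of $\hat b_0 z^n+\hat b_1 z^{n-1}+\dots+\hat b_n$ satisfies $|\breve z|<1$.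
   Context: This is the regularized (kernel-based) maximum entropy estimate of the coefficients of a high-order AR model $b(z)y_t=e_t$ with a Gaussian prior $\mathbf b\sim\mathcal N(0,\lambda K_{DI})$ (''diagonal kernel''). In the paper, $\hat r_k=\frac1N\sum_{t=1}^{N-k}y_ty_{t+k}$ are sample covariance lags of data $y_1,\dots,y_N$ and $\tilde b_0$ is a preliminary estimate of $b_0$; for the claim only the stated properties of $\hat\Sigma$ and $\tilde b_0$ are needed. *)

(* Defs.v *)
From HB Require Import structures.
From mathcomp Require Import all_boot all_order all_algebra.
From mathcomp Require Import complex.
Set Implicit Arguments. Unset Strict Implicit. Unset Printing Implicit Defensive.
Import Order.TTheory GRing.Theory Num.Theory.
Local Open Scope ring_scope.

Definition posdef (R : numDomainType) (m : nat) (A : 'M[R]_m) : Prop :=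
  A^T = A /\ forall x : 'cV[R]_m, x != 0 -> 0 < (x^T *m A *m x) 0 0.

Definition toeplitz (R : ringType) (m : nat) (A : 'M[R]_m) : Prop :=
  exists r : nat -> R, forall i j : 'I_m, A i j = r `|(i : nat) - (j : nat)|%N.

Definition K_DI (R : ringType) (n : nat) (beta : R) : 'M[R]_n.+1 :=
  diag_mx (\row_(i < n.+1) beta ^+ i.+1).

Definition e0 (R : ringType) (n : nat) : 'cV[R]_n.+1 :=
  \col_(i < n.+1) (i == ord0)%:R.

Definition bML (R : fieldType) (n N : nat) (lambda beta b0t : R)
  (Sigma : 'M[R]_n.+1) : 'cV[R]_n.+1 :=
  b0t^-1 *: (invmx (Sigma + invmx (((N - n)%:R * lambda) *: K_DI n beta)) *m e0 R n).

Definition bpoly (R : ringType) (n : nat) (b : 'cV[R]_n.+1) : {poly R} :=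
  \sum_(k < n.+1) b k 0 *: 'X^(n - k).

(* Main.v *)
Require Import Defs.
From HB Require Import structures.
From mathcomp Require Import all_boot all_order all_algebra.
From mathcomp Require Import complex.
From mathcomp Require Import ring lra zify.
Import Order.TTheory GRing.Theory Num.Theory.
Local Open Scope ring_scope.

Section Real.
Variable R : rcfType.

Lemma qformE m (M : 'M[R]_m) (y : 'cV_m) :
  (y^T *m M *m y) 0 0 = \sum_i \sum_j y i 0 * M i j * y j 0.
Proof.
rewrite mxE exchange_big /=; apply: eq_bigr => j _.
rewrite mxE mulr_suml; apply: eq_bigr => i _; by rewrite !mxE.
Qed.

Lemma inv_diag m (r : 'rV[R]_m) : (forall i, r 0 i != 0) ->
  invmx (diag_mx r) = diag_mx (\row_i (r 0 i)^-1).
Proof.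
move=> nz.
have H : diag_mx (\row_i (r 0 i)^-1) *m diag_mx r = 1%:M.
  apply/matrixP=> i j; rewrite mul_diag_mx !mxE.
  case: (eqVneq i j) => [->|ne]; first by rewrite /= mulVf.
  by rewrite /= mulr0n mulr0.
have [_ U] := mulmx1_unit H.
by rewrite -[LHS]mul1mx -H mulmxK.
Qed.

Variables (n N : nat) (lambda beta b0t : R) (Sigma : 'M[R]_n.+1).
Hypotheses (nN : (n < N)%N) (lam0 : 0 < lambda) (bet0 : 0 < beta)
  (bet1 : beta < 1) (b0 : b0t != 0) (PD : posdef Sigma).

Definition sc := (N - n)%:R * lambda.
Definition dd (k : nat) := (sc * beta ^+ k.+1)^-1.

Lemma sc_gt0 : 0 < sc.
Proof. by rewrite /sc mulr_gt0 // ltr0n subn_gt0. Qed.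

Lemma dd_gt0 k : 0 < dd k.
Proof. by rewrite /dd invr_gt0 mulr_gt0 ?sc_gt0 // exprn_gt0. Qed.

Lemma dd_lt k : dd k < dd k.+1.
Proof.
have s0 := sc_gt0.
have e0 : 0 < beta ^+ k.+1 by rewrite exprn_gt0.
have e1 : 0 < beta ^+ k.+2 by rewrite exprn_gt0.
rewrite /dd ltf_pV2 ?posrE ?mulr_gt0 ?ltr0n ?subn_gt0 //.
rewrite ltr_pM2l // [X in X < _]exprS gtr_pMl; first by []. exact: e0.
Qed.

Definition Dm : 'M[R]_n.+1 := diag_mx (\row_(i < n.+1) dd i).

Lemma DmE : invmx ((sc *: K_DI n beta)) = Dm.
Proof.
have -> : sc *: K_DI n beta = diag_mx (\row_(i < n.+1) (sc * beta ^+ i.+1)).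
  by apply/matrixP=> i j; rewrite /K_DI !mxE mulrnAr.
rewrite (@inv_diag _ (\row_(i < n.+1) (sc * beta ^+ i.+1))); last first.
  move=> i; rewrite !mxE.
  exact: (mulf_neq0 (lt0r_neq0 sc_gt0) (expf_neq0 _ (lt0r_neq0 bet0))).
by apply/matrixP=> i j; rewrite /Dm !mxE.
Qed.

Definition A := Sigma + Dm.

Lemma A_sym i j : A i j = A j i.
Proof.
case: PD => sy _.
rewrite /A !mxE -[Sigma in LHS]sy mxE; congr (_ + _).
by rewrite eq_sym; case: (eqVneq j i) => [->|]; rewrite ?mulr0n.
Qed.

Lemma qA (y : 'cV[R]_n.+1) : \sum_i \sum_j y i 0 * A i j * y j 0 =
  (y^T *m Sigma *m y) 0 0 + \sum_(i < n.+1) dd i * y i 0 ^+ 2.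
Proof.
rewrite qformE -big_split /=; apply: eq_bigr => i _.
rewrite (bigD1 i) //= [X in _ = X + _](bigD1 i) //= /A.
have -> : \sum_(j | j != i) y i 0 * (Sigma + Dm) i j * y j 0 =
   \sum_(j | j != i) y i 0 * Sigma i j * y j 0.
  by apply: eq_bigr => j ji; rewrite !mxE eq_sym (negbTE ji) mulr0n addr0.
rewrite !mxE eqxx mulr1n; ring.
Qed.

Lemma posA (y : 'cV[R]_n.+1) : y != 0 -> 0 < \sum_i \sum_j y i 0 * A i j * y j 0.
Proof.
move=> y0; rewrite qA; case: PD => _ H.
apply: ltr_wpDr; last exact: H.
by apply: sumr_ge0 => i _; rewrite mulr_ge0 ?sqr_ge0 ?ltW ?dd_gt0.
Qed.

Lemma A_unit : A \in unitmx.
Proof.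
rewrite unitmxE unitfE; apply/negP => /det0P [v v0 vA].
have := posA (v^T); rewrite trmx_eq0 => /(_ v0).
rewrite -qformE trmxK vA mul0mx mxE ltxx //.
Qed.

Lemma Ab i : \sum_j A i j * bML N lambda beta b0t Sigma j 0 = b0t^-1 * (i == ord0)%:R.
Proof.
have : A *m bML N lambda beta b0t Sigma = b0t^-1 *: e0 R n.
  by rewrite /bML -/sc DmE -/A -scalemxAr mulmxA mulmxV ?A_unit // mul1mx.
move/matrixP => /(_ i 0); rewrite !mxE => <-; apply: eq_bigr => j _; by [].
Qed.

End Real.


Local Open Scope complex_scope.

Section Cx.
Variable R : rcfType.
Local Notation RE := (@complex.Re R).
Local Notation IM := (@complex.Im R).

Lemma term_id (u v : R[i]) (a : R) :
  u^* * a%:C * v = ((RE u * RE v + IM u * IM v) * a)%:C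
     + 'i * ((RE u * IM v - IM u * RE v) * a)%:C.
Proof.
case: u => a1 b1; case: v => a2 b2 /=.
apply/eqP; rewrite eq_complex /=; apply/andP; split; apply/eqP; ring.
Qed.

Variable m : nat.
Variable A : 'M[R]_m.
Hypothesis Asym : forall i j, A i j = A j i.
Hypothesis Apos : forall y : 'cV[R]_m, y != 0 ->
  0 < \sum_i \sum_j y i 0 * A i j * y j 0.

Definition Bc (x y : 'I_m -> R[i]) := \sum_i \sum_j (x i)^* * (A i j)%:C * y j.
Definition Qf (y : 'I_m -> R) := \sum_i \sum_j y i * A i j * y j.

Lemma Qf_gt0 y : (exists i, y i != 0) -> 0 < Qf y.
Proof.
move=> [k yk]; have := Apos (\col_i y i).
rewrite /Qf; under eq_bigr do under eq_bigr do rewrite !mxE.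
apply; apply/eqP => /matrixP /(_ k 0); rewrite !mxE; exact/eqP.
Qed.

Lemma Qf_ge0 y : 0 <= Qf y.
Proof.
case: (boolP [exists i, y i != 0]) => [/existsP H|/existsPn H].
  exact/ltW/Qf_gt0.
rewrite /Qf big1 // => i _; rewrite big1 // => j _.
by move: (H i); rewrite negbK => /eqP ->; rewrite !mul0r.
Qed.

Lemma Bc_diag x : Bc x x = (Qf (fun i => RE (x i)) + Qf (fun i => IM (x i)))%:C.
Proof.
rewrite /Bc; under eq_bigr do under eq_bigr do rewrite term_id.
under eq_bigr do rewrite big_split /=.
rewrite big_split /=.
under [X in _ + X = _]eq_bigr do rewrite -mulr_sumr -rmorph_sum.
rewrite -mulr_sumr -rmorph_sum.
under eq_bigr do rewrite -rmorph_sum.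
rewrite -rmorph_sum.
have -> : \sum_i \sum_j ((RE (x i) * IM (x j) - IM (x i) * RE (x j)) * A i j) = 0.
  under eq_bigr do under eq_bigr do rewrite mulrBl.
  under eq_bigr do rewrite sumrB.
  rewrite sumrB; apply/eqP; rewrite subr_eq0; apply/eqP.
  rewrite exchange_big /=; apply: eq_bigr => i _; apply: eq_bigr => j _.
  rewrite Asym; ring.
rewrite mulr0 addr0 /Qf -big_split /=; congr (_%:C); apply: eq_bigr => i _.
rewrite -big_split /=; apply: eq_bigr => j _; ring.
Qed.

Lemma Bc_ge0 x : 0 <= Bc x x.
Proof. by rewrite Bc_diag ler0c addr_ge0 ?Qf_ge0. Qed.

Lemma Bc_gt0 x : (exists i, x i != 0) -> 0 < Bc x x.
Proof.
move=> [k xk]; rewrite Bc_diag ltcR.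
move: xk; case E: (x k) => [a b] xk.
have [a0|a0] := eqVneq a 0.
  have b0 : b != 0 by apply: contra xk => /eqP b0; rewrite a0 b0.
  apply: ltr_wpDl; first exact: Qf_ge0.
  by apply: Qf_gt0; exists k; rewrite E.
apply: ltr_wpDr; first exact: Qf_ge0.
by apply: Qf_gt0; exists k; rewrite E.
Qed.

End Cx.
Arguments Bc {R m}. Arguments Qf {R m}. Arguments Bc_ge0 {R m A}. Arguments Bc_gt0 {R m A}. Arguments Bc_diag {R m A}.


Lemma distSS (i j : nat) : `|(i.+1 : int) - (j.+1 : int)|%N = `|(i : int) - (j : int)|%N.
Proof. by rewrite !intS; congr absz; ring. Qed.

Lemma key (R : rcfType) (n : nat) (Sigma A : 'M[R]_n.+1) (r : nat -> R)
  (dd : nat -> R) (bv : 'I_n.+1 -> R) (c : R) (q : {poly R[i]}) (z0 : R[i]) :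
 (forall i j : 'I_n.+1, Sigma i j = r `|(i : nat) - (j : nat)|%N) ->
 (forall i j : 'I_n.+1, A i j = Sigma i j + dd i *+ (i == j)) ->
 (forall k, dd k < dd k.+1) ->
 (forall i j, A i j = A j i) ->
 (forall y : 'cV[R]_n.+1, y != 0 -> 0 < \sum_i \sum_j y i 0 * A i j * y j 0) ->
 (forall i, \sum_j A i j * bv j = c * (i == ord0)%:R) ->
 (forall k : 'I_n.+1, (bv k)%:C = ('X * q)`_(n - k) - z0 * q`_(n - k)) ->
 q`_n = 0 ->
 (exists i : 'I_n, q`_(n - i.+1) != 0) ->
 `|z0| < 1.
Proof.
move=> Hr HA Hdd Asym Apos Hb Hbq qn [i0 qi0].
pose u (k : 'I_n.+1) := ('X * q)`_(n - k).
pose w (k : 'I_n.+1) := q`_(n - k).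
pose bc (k : 'I_n.+1) := (bv k)%:C.
have w0 : w ord0 = 0 by rewrite /w subn0.
have umax : u ord_max = 0 by rewrite /u subnn coefXM.
have uw (i : 'I_n) : u (widen_ord (leqnSn n) i) = w (lift ord0 i).
  rewrite /u /w coefXM lift0 /=.
  have -> : (n - i == 0)%N = false by rewrite subn_eq0 leqNgt ltn_ord.
  by rewrite subnS.
have G1 : Bc A w bc = 0.
  rewrite /Bc (eq_bigr (fun i => (w i)^* * (c * (i == ord0)%:R)%:C)); last first.
    move=> i _; rewrite -Hb rmorph_sum mulr_sumr; apply: eq_bigr => j _.
    by rewrite rmorphM mulrA.
  rewrite (bigD1 ord0) //= w0 rmorph0 mul0r add0r big1 // => i /negbTE ->.
  by rewrite mulr0 mulr0.
have G2 : Bc A bc w = 0.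
  rewrite /Bc exchange_big /=.
  rewrite (eq_bigr (fun j => (c * (j == ord0)%:R)%:C * w j)); last first.
    move=> j _; rewrite -Hb rmorph_sum mulr_suml; apply: eq_bigr => i _.
    have re : (bv i)%:C \is Num.real by apply/complex_realP; exists (bv i).
    by rewrite /bc (conj_Creal re) rmorphM Asym; ring.
  rewrite (bigD1 ord0) //= w0 mulr0 add0r big1 // => i /negbTE ->.
  by rewrite mulr0 mul0r.
have G3 : Bc A u u = Bc A bc bc + (Num.conj z0 * z0) * Bc A w w.
  have ue k : u k = bc k + z0 * w k by rewrite /bc Hbq /u /w addrNK.
  have E i j : Num.conj (u i) * (A i j)%:C * u j =
     Num.conj (bc i) * (A i j)%:C * bc j + z0 * (Num.conj (bc i) * (A i j)%:C * w j)
     + Num.conj z0 * (Num.conj (w i) * (A i j)%:C * bc j)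
     + (Num.conj z0 * z0) * (Num.conj (w i) * (A i j)%:C * w j).
    by rewrite !ue rmorphD rmorphM; ring.
  have sc (k : R[i]) (F : 'I_n.+1 -> 'I_n.+1 -> R[i]) :
      \sum_i \sum_j (k * F i j) = k * \sum_i \sum_j F i j.
    by rewrite mulr_sumr; apply: eq_bigr => i _; rewrite mulr_sumr.
  rewrite /Bc; under eq_bigr do under eq_bigr do rewrite E.
  under eq_bigr do rewrite !big_split /=.
  rewrite !big_split /= !sc.
  move: G1 G2; rewrite /Bc => -> ->; by rewrite !mulr0 !addr0.

pose BS (x : 'I_n.+1 -> R[i]) :=
  \sum_i \sum_j Num.conj (x i) * (Sigma i j)%:C * x j.
pose BD (x : 'I_n.+1 -> R[i]) := \sum_(i < n.+1) (dd i)%:C * (Num.conj (x i) * x i).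
have dec x : Bc A x x = BS x + BD x.
  rewrite /Bc /BS /BD -big_split; apply: eq_bigr => i _ /=.
  rewrite (bigD1 i) //= [X in _ = X + _](bigD1 i) //=.
  have -> : \sum_(j | j != i) Num.conj (x i) * (A i j)%:C * x j =
     \sum_(j | j != i) Num.conj (x i) * (Sigma i j)%:C * x j.
    by apply: eq_bigr => j ji; rewrite HA eq_sym (negbTE ji) mulr0n addr0.
  rewrite HA eqxx mulr1n rmorphD; ring.
have BSe : BS u = BS w.
  rewrite /BS big_ord_recr /= [X in _ + X]big1 ?addr0; last by move=> j _; rewrite umax rmorph0 !mul0r.
  rewrite big_ord_recl /= [X in X + _]big1 ?add0r; last by move=> j _; rewrite w0 rmorph0 !mul0r.
  apply: eq_bigr => i _.
  rewrite big_ord_recr /= umax mulr0 addr0 big_ord_recl /= w0 mulr0 add0r.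
  apply: eq_bigr => j _.
  by rewrite !uw !Hr /= /bump !add1n distSS.
have BDlt : BD u < BD w.
  rewrite /BD big_ord_recr /= umax !mulr0 addr0.
  rewrite big_ord_recl /= w0 !mulr0 add0r.
  rewrite -subr_gt0 -sumrB (bigD1 i0) //=.
  have nn (x : R[i]) : 0 <= Num.conj x * x by rewrite mulrC mul_conjC_ge0.
  apply: ltr_wpDr.
    apply: sumr_ge0 => i _; rewrite uw -mulrBl -rmorphB.
    by rewrite mulr_ge0 // ler0c subr_ge0 /bump add1n ltW.
  rewrite uw -mulrBl -rmorphB mulr_gt0 //.
    by rewrite ltcR subr_gt0 /bump add1n.
  rewrite lt0r nn andbT mulf_neq0 //.
    by rewrite fmorph_eq0 /w /= /bump add1n.
have G5 : Bc A u u < Bc A w w by rewrite !dec BSe ltrD2l.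
have bpos : 0 <= Bc A bc bc := Bc_ge0 Asym Apos bc.
have wpos : 0 < Bc A w w.
  by apply: (Bc_gt0 Asym Apos); exists (lift ord0 i0); rewrite /w /= /bump add1n.
have nz : Num.conj z0 * z0 = `|z0| ^+ 2 by rewrite normCK mulrC.
rewrite real_ltNge ?normr_real ?real1 //; apply/negP => H1.
have t1 : 1 <= `|z0| ^+ 2 by rewrite exprn_ege1.
have : Bc A w w < Bc A w w.
  apply: le_lt_trans G5; rewrite G3 nz.
  apply: le_trans (ler_peMl (ltW wpos) t1) _.
  by rewrite lerDr.
by rewrite ltxx.
Qed.


Theorem proposition1 (R : rcfType) (n N : nat) (lambda beta b0t : R)
  (Sigma : 'M[R]_n.+1) :
  (1 <= n)%N -> (n < N)%N -> 0 < lambda -> 0 < beta -> beta < 1 ->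
  b0t != 0 -> posdef Sigma -> toeplitz Sigma ->
  bpoly (bML N lambda beta b0t Sigma) != 0 ->
  forall z : R[i],
    root (map_poly (fun x : R => x%:C) (bpoly (bML N lambda beta b0t Sigma))) z ->
    `|z| < 1.
Proof.
move=> n1 nN lam0 bet0 bet1 b0 PD [r Hr] bnz z0 rt.
set b := bML N lambda beta b0t Sigma in bnz rt *.
set p := map_poly _ _ in rt.
have coefb (j : nat) : (bpoly b)`_j = \sum_(k < n.+1) b k 0 * (j == (n - k)%N)%:R.
  rewrite /bpoly coef_sum; apply: eq_bigr => k _; by rewrite coefZ coefXn.
have coefk (k : 'I_n.+1) : (bpoly b)`_(n - k) = b k 0.
  rewrite coefb (bigD1 k) //= eqxx mulr1 big1 ?addr0 // => k' kk'.
  have -> : (n - k == n - k')%N = false; last by rewrite mulr0.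
  apply/negbTE/eqP => h; move/eqP: kk'; apply; apply/val_inj => /=.
  have := ltn_ord k; have := ltn_ord k'; lia.
have sizeb : (size (bpoly b) <= n.+1)%N.
  apply/leq_sizeP => j jn; rewrite coefb big1 // => k _.
  have -> : (j == n - k)%N = false; last by rewrite mulr0.
  apply/negbTE/eqP => h; move: jn; lia.
have pnz : p != 0 by rewrite map_poly_eq0.
have [q pq] := factor_theorem _ _ rt.
have qnz : q != 0 by apply: contra pnz; rewrite pq => /eqP ->; rewrite mul0r.
have sizeq : (size q <= n)%N.
  have : size p = (size q + 2).-1 by rewrite pq size_Mmonic ?monicXsubC ?size_XsubC.
  rewrite size_map_poly => h; move: sizeb; rewrite h; lia.
have qn : q`_n = 0 by apply/leq_sizeP: sizeq.
have ex : exists i : 'I_n, q`_(n - i.+1) != 0.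
  have sq0 : (0 < size q)%N by rewrite size_poly_gt0.
  have hi : (n - (size q).-1.+1 < n)%N by lia.
  exists (Ordinal hi) => /=.
  have -> : (n - (n - (size q).-1.+1).+1 = (size q).-1)%N by lia.
  by rewrite -lead_coefE lead_coef_eq0.
have Hbq (k : 'I_n.+1) : (b k 0)%:C = ('X * q)`_(n - k) - z0 * q`_(n - k).
  have : p`_(n - k) = (b k 0)%:C by rewrite coef_map /= coefk.
  by move=> <-; rewrite pq mulrBr coefB coefMC (mulrC q 'X) (mulrC _ z0).
apply: (@key R n Sigma (@A R n N lambda beta Sigma) r (@dd R n N lambda beta) (fun j => b j 0) b0t^-1 q z0).
- exact: Hr.
- by move=> i j; rewrite /A /Dm !mxE.
- exact: dd_lt.
- exact: A_sym.
- exact: posA.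
- exact: Ab.
- exact: Hbq.
- exact: qn.
- exact: ex.
Qed.
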